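(* Fix a dataset $\mathbb D_N$ and a point $x\in\mathcal X$. Suppose the GP-CBF-SOCP is feasible at $x$, i.e. there exists $u\in\mathbb R^m$ with $$L_{\tilde f}B(x)+L_{\tilde g}B(x)u+\mu_B(x,u|\mathbb D_N)-\beta\sigma_B(x,u|\mathbb D_N)+\gamma(B(x))\ge0.$$ Then $$\begin{bmatrix}\widehat{L_fB}(x|\mathbb D_N)+\gamma(B(x))\\ \widehat{L_gB}(x|\mathbb D_N)^T\end{bmatrix}^T\Sigma_B(x|\mathbb D_N)^{-1}\begin{bmatrix}\widehat{L_fB}(x|\mathbb D_N)+\gamma(B(x))\\ \widehat{L_gB}(x|\mathbb D_N)^T\end{bmatrix}\ge\beta^2.$$
   Context: Consider the control-affine system $\dot x=f(x)+g(x)u$ with state $x\in\mathcal X\subset\mathbb R^n$ and input $u\in\mathbb R^m$. Here $f$ and $g$ are locally Lipschitz and unknown. A nominal model $\tilde f,\tilde g$ of the same type is available. Let $B:\mathcal X\to\mathbb R$ be continuously differentiable and let $\gamma$ be an extended class-$\mathcal K_\infty$ function. Lie derivatives: $L_{\tilde f}B(x)=\nabla B(x)\tilde f(x)\in\mathbb R$ and $L_{\tilde g}B(x)=\nabla B(x)\tilde g(x)\in\mathbb R^{1\times m}$; $L_fB$ and $L_gB$ are defined similarly. Set $\Delta_B(x,u)=(L_fB-L_{\tilde f}B)(x)+(L_gB-L_{\tilde g}B)(x)u$. A dataset $\mathbb D_N=\{((x_j,u_j),z_j)\}_{j=1}^N$ consists of measurements $z_j=\Delta_B(x_j,u_j)+\epsilon_j$.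 GP model: - Kernels $k_1,\dots,k_{m+1}$ on $\mathcal X$ are given, together with the affine dot product kernel $k_c((x,y),(x',y'))=y^T\mathrm{diag}(k_i(x,x'))_{i=1}^{m+1}y'$. - Let $y_j=[1,u_j^T]^T$, $\mathbf z=(z_j)_j$, let $\sigma_n>0$, and let $K_c$ be the $N\times N$ Gram matrix of $k_c$ on the data. - Let $K_{**}(x)=\mathrm{diag}(k_i(x,x))$, and let $K_{*Y}(x)\in\mathbb R^{(m+1)\times N}$ have entries $k_i(x,x_j)(y_j)_i$. - Define $m_B(x|\mathbb D_N)=K_{*Y}(K_c+\sigma_n^2I)^{-1}\mathbf z$ and $\Sigma_B(x|\mathbb D_N)=K_{**}-K_{*Y}(K_c+\sigma_n^2I)^{-1}K_{*Y}^T$. The matrix $\Sigma_B(x|\mathbb D_N)$ is positive definite. - The GP posterior mean and standard deviation are $\mu_B(x,u|\mathbb D_N)=m_B^T[1;u]$ and $\sigma_B(x,u|\mathbb D_N)=\sqrt{[1,u^T]\Sigma_B[1;u]}$. $\beta>0$ is a constant. Define $\widehat{L_fB}(x|\mathbb D_N)=L_{\tilde f}B(x)+(m_B)_1$ and $\widehat{L_gB}(x|\mathbb D_N)=L_{\tilde g}B(x)+((m_B)_2,\dots,(m_B)_{m+1})\in\mathbb R^{1\times m}$. The GP-CBF-SOCP at $x$ minimizes $\|u-u_{\text{ref}}(x)\|_2^2$ subject to the displayed constraint, where $u_{\text{ref}}$ is a reference controller. *)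

(* Defs.v *)
From HB Require Import structures.
From mathcomp Require Import all_boot all_order all_algebra.
From mathcomp Require Import all_classical all_reals all_analysis.
Set Implicit Arguments. Unset Strict Implicit. Unset Printing Implicit Defensive.
Import Order.TTheory GRing.Theory Num.Theory.
Import numFieldNormedType.Exports.
Local Open Scope classical_set_scope.
Local Open Scope ring_scope.

Section GP.
Variables (R : realType) (n m N : nat).

Definition LieD (B : 'rV[R]_n -> R) (h : 'rV[R]_n -> 'rV[R]_n) (x : 'rV[R]_n) : R :=
  'd B x (h x).

(* L_g B (x) in R^{1 x m}; gt x j is the j-th column of g(x). *)
Definition LieDg (B : 'rV[R]_n -> R) (gt : 'rV[R]_n -> 'I_m -> 'rV[R]_n)
  (x : 'rV[R]_n) : 'rV[R]_m := \row_j 'd B x (gt x j).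

Definition is_kernel (k : 'rV[R]_n -> 'rV[R]_n -> R) : Prop :=
  (forall a b, k a b = k b a) /\
  (forall p (pts : 'I_p -> 'rV[R]_n) (c : 'cV[R]_p),
      0 <= ((c^T *m \matrix_(i, j) k (pts i) (pts j)) *m c) 0 0).

Definition ext_classKinf (gam : R -> R) : Prop :=
  continuous gam /\ (forall a b, a < b -> gam a < gam b) /\ gam 0 = 0 /\
  (gam x @[x --> +oo] --> +oo) /\ (gam x @[x --> -oo] --> -oo).

Variables (k : 'I_(1 + m) -> 'rV[R]_n -> 'rV[R]_n -> R)
  (xs : 'I_N -> 'rV[R]_n) (us : 'I_N -> 'cV[R]_m) (z : 'cV[R]_N) (sn : R).

Definition yvec (u : 'cV[R]_m) : 'cV[R]_(1 + m) := col_mx 1 u.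

Definition Kc : 'M[R]_N :=
  \matrix_(j, j') \sum_(i < 1 + m) yvec (us j) i 0 * k i (xs j) (xs j') * yvec (us j') i 0.

Definition Kss (x : 'rV[R]_n) : 'M[R]_(1 + m) := \matrix_(i, i') ((i == i')%:R * k i x x).

Definition KsY (x : 'rV[R]_n) : 'M[R]_(1 + m, N) :=
  \matrix_(i, j) (k i x (xs j) * yvec (us j) i 0).

Definition mB (x : 'rV[R]_n) : 'cV[R]_(1 + m) :=
  KsY x *m invmx (Kc + sn ^+ 2 *: 1%:M) *m z.

Definition SigmaB (x : 'rV[R]_n) : 'M[R]_(1 + m) :=
  Kss x - KsY x *m invmx (Kc + sn ^+ 2 *: 1%:M) *m (KsY x)^T.

Definition muB (x : 'rV[R]_n) (u : 'cV[R]_m) : R := ((mB x)^T *m yvec u) 0 0.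

Definition sigmaB (x : 'rV[R]_n) (u : 'cV[R]_m) : R :=
  Num.sqrt (((yvec u)^T *m SigmaB x *m yvec u) 0 0).

End GP.

(* Main.v *)
Require Import Defs.
From HB Require Import structures.
From mathcomp Require Import all_boot all_order all_algebra.
From mathcomp Require Import all_classical all_reals all_analysis.
From mathcomp Require Import ring lra.
Import Order.TTheory GRing.Theory Num.Theory.
Import numFieldNormedType.Exports.
Local Open Scope ring_scope.

Theorem lemma3 (R : realType) (n m N : nat)
  (B : 'rV[R]_n -> R) (gam : R -> R)
  (ft : 'rV[R]_n -> 'rV[R]_n) (gt : 'rV[R]_n -> 'I_m -> 'rV[R]_n)
  (k : 'I_(1 + m) -> 'rV[R]_n -> 'rV[R]_n -> R)
  (xs : 'I_N -> 'rV[R]_n) (us : 'I_N -> 'cV[R]_m) (z : 'cV[R]_N)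
  (sn beta : R) (x : 'rV[R]_n) :
  (forall y, differentiable B y) ->
  ext_classKinf gam ->
  (forall i, is_kernel (k i)) ->
  0 < sn -> 0 < beta ->
  (forall v : 'cV[R]_(1 + m), v != 0 ->
     0 < ((v^T *m SigmaB k xs us sn x) *m v) 0 0) ->
  (exists u : 'cV[R]_m,
     0 <= LieD B ft x + (LieDg B gt x *m u) 0 0 + muB k xs us z sn x u
          - beta * sigmaB k xs us sn x u + gam (B x)) ->
  let Lf_hat := LieD B ft x + usubmx (mB k xs us z sn x) 0 0 in
  let Lg_hat := LieDg B gt x + (dsubmx (mB k xs us z sn x))^T in
  let w : 'cV[R]_(1 + m) := col_mx (Lf_hat + gam (B x))%:M Lg_hat^T in
  beta ^+ 2 <= ((w^T *m invmx (SigmaB k xs us sn x)) *m w) 0 0.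
Proof.
move=> _ _ kern snpos bpos PD [u Hu]; cbv zeta.
set w := col_mx _ _.
rewrite /sigmaB in Hu.
set S := SigmaB k xs us sn x in PD Hu *.
set P := invmx S.
have Sunit : S \in unitmx.
  rewrite -row_free_unit; apply: inj_row_free => v Hv.
  apply/eqP; apply/negPn/negP => vn0.
  have vT0 : v^T != 0 by rewrite trmx_eq0.
  have := PD _ vT0; rewrite trmxK Hv mul0mx mxE ltxx //.
have Kcsym : (Kc k xs us)^T = Kc k xs us.
  apply/matrixP => i j; rewrite !mxE; apply: eq_bigr => l _.
  rewrite (proj1 (kern l)); ring.
have Ksssym : (Kss k x)^T = Kss k x.
  apply/matrixP => i j; rewrite !mxE eq_sym; case: eqP => [->|_] //.
  by rewrite !mul0r.
have Ssym : S^T = S.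
  rewrite /S /SigmaB linearB /= Ksssym !trmx_mul trmxK trmx_inv linearD /= Kcsym.
  by rewrite linearZ /= trmx1 mulmxA.
have Psym : P^T = P by rewrite /P trmx_inv Ssym.
clearbody S.
set y := yvec u.
have y0 : y != 0.
  apply/negP => /eqP Hy; have := congr1 (@usubmx _ 1 m 1) Hy.
  rewrite col_mxKu => /matrixP/(_ 0 0); rewrite !mxE /=.
  by move/eqP; rewrite oner_eq0.
have tr00 : forall A : 'M[R]_1, A^T 0 0 = A 0 0 by move=> A; rewrite mxE.
pose q := fun a b : 'cV[R]_(1 + m) => ((a^T *m S) *m b) 0 0.
have qB1 : forall a b c, q (a - b) c = q a c - q b c.
  by move=> a b c; rewrite /q linearB /= !mulmxBl !mxE.
have qB2 : forall a b c, q a (b - c) = q a b - q a c.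
  by move=> a b c; rewrite /q !mulmxBr !mxE.
have qZ1 : forall t a b, q (t *: a) b = t * q a b.
  by move=> t a b; rewrite /q linearZ /= -!scalemxAl !mxE.
have qZ2 : forall t a b, q a (t *: b) = t * q a b.
  by move=> t a b; rewrite /q -!scalemxAr !mxE.
have qsym : forall a b, q a b = q b a.
  move=> a b; rewrite /q -tr00 !trmx_mul trmxK Ssym mulmxA //.
have qyPw : q y (P *m w) = ((w^T *m y) 0 0).
  by rewrite /q -tr00 !trmx_mul trmxK Psym Ssym mulmxA -(mulmxA _ P S) mulVmx // mulmx1.
have qPw : q (P *m w) (P *m w) = ((w^T *m P) *m w) 0 0.
  rewrite /q trmx_mul Psym -!mulmxA (mulmxA S) mulmxV // mul1mx //.
have qpos : forall d, 0 <= q d d.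
  move=> d; have [->|dn0] := eqVneq d 0; last by apply: ltW; apply: PD.
  by rewrite /q mulmx0 mxE.
have c_eq : (w^T *m y) 0 0 = LieD B ft x + (LieDg B gt x *m u) 0 0
    + muB k xs us z sn x u + gam (B x).
  rewrite /w /y /yvec /muB tr_col_mx trmxK mul_row_col.
  rewrite -[mB k xs us z sn x]vsubmxK tr_col_mx mul_row_col col_mxKu col_mxKd.
  rewrite !mulmx1 mulmxDl !mxE eqxx mulr1n; ring.
rewrite -qPw.
have apos : 0 < q y y by apply: PD.
rewrite -/y -/(q y y) in Hu.
have {}Hu : beta * Num.sqrt (q y y) <= (w^T *m y) 0 0 by rewrite c_eq; lra.
set a := q y y in apos Hu *.
set c := (w^T *m y) 0 0 in Hu qyPw *.
set b := q (P *m w) (P *m w).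
have sa := sqrtr_ge0 a.
have sa2 : Num.sqrt a ^+ 2 = a by rewrite sqr_sqrtr // ltW.
have sapos : 0 < Num.sqrt a by rewrite sqrtr_gt0.
have Hc : beta * Num.sqrt a <= c by [].
have cpos : 0 < c by have := mulr_gt0 bpos sapos; lra.
have c2 : beta ^+ 2 * a <= c ^+ 2.
  rewrite -sa2 -exprMn; apply: lerXn2r => //; rewrite ?nnegrE; nra.
pose t := a / c.
have tc : t * c = a by rewrite /t mulfVK // gt_eqF.
have key := qpos (y - t *: (P *m w)).
rewrite qB1 !qB2 !qZ1 !qZ2 (qsym (P *m w) y) qyPw -/b in key.
rewrite -/a tc in key.
have k0 : a <= t * (t * b) by lra.
have k1 : a * c ^+ 2 <= a ^+ 2 * b.
  have -> : a ^+ 2 * b = t * (t * b) * c ^+ 2.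
    by rewrite -tc; ring.
  by apply: ler_wpM2r => //; rewrite sqr_ge0.
have k2 : a ^+ 2 * beta ^+ 2 <= a ^+ 2 * b.
  apply: le_trans k1; rewrite expr2 -mulrA mulrC.
  nra.
by rewrite -(ler_pM2l (exprn_gt0 2 apos)).
Qed.
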